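(* Let $G$ be a finite simple connected graph with adjacency matrix $A$ having eigenvalues $\mu_1\ge\mu_2\ge\cdots\ge\mu_n$, and suppose $\mu_2(A)>0$. Let $g$ be the multiplicity of the smallest eigenvalue $\mu_n(A)$. Then \[ \chi_q(G)\ \ge\ 1+\min\left\{g,\ \frac{|\mu_n(A)|}{\mu_2(A)}\right\}. \]
   Context: A quantum $c$-coloring of a graph $G=(V,E)$ is a collection of orthogonal projectors $\{P_{v,k}: v\in V, k\in[c]\}$ in $\mathbb{C}^{d\times d}$, for some integer $d>0$, such that $\sum_{k\in[c]}P_{v,k}=I_d$ for every vertex $v\in V$, and $P_{v,k}P_{w,k}=0_d$ for every edge $vw\in E$ and every $k\in[c]$. The quantum chromatic number $\chi_q(G)$ is the smallest $c$ for which $G$ admits a quantum $c$-coloring in some dimension $d>0$. *)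

(* Defs.v *)
From HB Require Import structures.
From mathcomp Require Import all_boot all_order all_algebra.
From mathcomp Require Import complex.
From mathcomp Require Import reals.
Set Implicit Arguments. Unset Strict Implicit. Unset Printing Implicit Defensive.
Import Order.TTheory GRing.Theory Num.Theory.
Local Open Scope ring_scope.

Definition simple_graph (n : nat) (e : rel 'I_n) : Prop :=
  symmetric e /\ irreflexive e.

Definition connected_graph (n : nat) (e : rel 'I_n) : Prop :=
  forall x y : 'I_n, connect e x y.

Definition adjmx (R : ringType) (n : nat) (e : rel 'I_n) : 'M[R]_n :=
  \matrix_(i, j) (e i j)%:R.

Definition adjoint (C : numClosedFieldType) (d : nat) (M : 'M[C]_d) : 'M[C]_d :=
  map_mx Num.conj (M^T).

Definition orth_projector (C : numClosedFieldType) (d : nat) (P : 'M[C]_d) :=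
  P *m P = P /\ adjoint P = P.

Definition quantum_coloring (R : rcfType) (n : nat) (e : rel 'I_n) (c d : nat)
    (P : 'I_n -> 'I_c -> 'M[R[i]]_d) : Prop :=
  (forall v k, orth_projector (P v k)) /\
  (forall v, \sum_(k < c) P v k = 1%:M) /\
  (forall v w k, e v w -> P v k *m P w k = 0).

Definition quantum_colorable (R : rcfType) (n : nat) (e : rel 'I_n) (c : nat) : Prop :=
  exists (d : nat) (P : 'I_n -> 'I_c -> 'M[R[i]]_d), (0 < d)%N /\ quantum_coloring e P.

(* s is the list of eigenvalues of the real symmetric matrix A, with
   multiplicity, sorted nonincreasingly: mu_1 >= mu_2 >= ... >= mu_n. *)
Definition sorted_spectrum (R : realType) (n : nat) (A : 'M[R]_n) (s : seq R) : Prop :=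
  sorted (fun x y => y <= x) s /\ char_poly A = \prod_(x <- s) ('X - x%:P).
Arguments quantum_colorable R {n} e c.

(* Main.v *)
Require Import Defs.
From HB Require Import structures.
From mathcomp Require Import all_boot all_order all_algebra.
From mathcomp Require Import complex.
From mathcomp Require Import reals.
From mathcomp Require Import ring.
Set Implicit Arguments. Unset Strict Implicit. Unset Printing Implicit Defensive.
Import Order.TTheory GRing.Theory Num.Theory.
Local Open Scope ring_scope.

Notation "M ^H" := (map_mx Num.conj (trmx M)) (at level 8).

Section Gen.
Variable C : numClosedFieldType.

Lemma sum_sq_le (c : nat) (a : 'I_c -> C) :
  `|\sum_k a k| ^+ 2 <= c%:R * \sum_k `|a k| ^+ 2.
Proof.
rewrite -subr_ge0.
set S := \sum_k a k; set N := \sum_k `|a k| ^+ 2.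
have E1 : \sum_(k < c) \sum_(l < c) a k * (a k)^* = c%:R * N.
  rewrite /N mulr_sumr; apply: eq_bigr => k _.
  by rewrite sumr_const card_ord normCK mulr_natl.
have E2 : \sum_(k < c) \sum_(l < c) a l * (a l)^* = c%:R * N.
  by rewrite exchange_big E1.
have E3 : \sum_(k < c) \sum_(l < c) a k * (a l)^* = S * S^*.
  by rewrite /S rmorph_sum big_distrlr.
have E4 : \sum_(k < c) \sum_(l < c) a l * (a k)^* = S * S^*.
  by rewrite exchange_big E3.
have H : (\sum_(k < c) \sum_(l < c) `|a k - a l| ^+ 2) = (c%:R * N - `|S| ^+ 2) *+ 2.
  have -> : \sum_(k < c) \sum_(l < c) `|a k - a l| ^+ 2 =
     \sum_(k < c) \sum_(l < c) (a k * (a k)^* + a l * (a l)^*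
        - (a k * (a l)^* + a l * (a k)^*)).
    apply: eq_bigr => k _; apply: eq_bigr => l _.
    rewrite normCK rmorphB /= mulrDr !mulrDl !mulrN !mulNr opprK.
    ring.
  under eq_bigr do rewrite sumrB !big_split /=.
  rewrite sumrB !big_split /= E1 E2.
  rewrite E3 E4 normCK.
  by rewrite mulr2n; ring.
have : 0 <= \sum_(k < c) \sum_(l < c) `|a k - a l| ^+ 2.
  by apply: sumr_ge0 => k _; apply: sumr_ge0 => l _; exact: exprn_ge0.
by rewrite H pmulrn_lge0.
Qed.

Lemma tr_diag_form m d (W : 'M[C]_(m,d)) (l : 'rV[C]_m) :
  \tr (W^H *m diag_mx l *m W) = \sum_j l 0 j * \sum_b `|W j b| ^+ 2.
Proof.
rewrite mul_mx_diag /mxtrace.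
under eq_bigr do rewrite !mxE.
under eq_bigr do under eq_bigr do rewrite !mxE.
rewrite exchange_big /=; apply: eq_bigr => j _.
rewrite mulr_sumr; apply: eq_bigr => b _.
rewrite normCK; ring.
Qed.

Lemma tr_norm m d (W : 'M[C]_(m,d)) :
  \tr (W^H *m W) = \sum_j \sum_b `|W j b| ^+ 2.
Proof.
rewrite /mxtrace.
under eq_bigr do rewrite !mxE.
under eq_bigr do under eq_bigr do rewrite !mxE.
rewrite exchange_big /=; apply: eq_bigr => j _.
apply: eq_bigr => b _.
rewrite normCK; ring.
Qed.

Lemma adjM m n p (X : 'M[C]_(m,n)) (Y : 'M[C]_(n,p)) : (X *m Y)^H = Y^H *m X^H.
Proof. by rewrite trmx_mul map_mxM. Qed.

Lemma adjK m n (X : 'M[C]_(m,n)) : (X^H)^H = X.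
Proof. by apply/matrixP => i j; rewrite !mxE conjCK. Qed.

Lemma row_sq d (u : 'rV[C]_d) : (u *m u^H) 0 0 = \sum_b `|u 0 b| ^+ 2.
Proof.
rewrite !mxE; apply: eq_bigr => b _; rewrite !mxE normCK.
done.
Qed.


Lemma tr_quad n d (A : 'M[C]_n) (Y : 'M[C]_(n,d)) :
  \tr (Y^H *m A *m Y) = \sum_w \sum_v A w v * (row v Y *m (row w Y)^H) 0 0.
Proof.
rewrite /mxtrace.
under eq_bigr do rewrite !mxE.
under eq_bigr do under eq_bigr do rewrite !mxE.
under eq_bigr do under eq_bigr do rewrite mulr_suml.
rewrite exchange_big /=.
under eq_bigr do rewrite exchange_big /=.
rewrite exchange_big /=.
apply: eq_bigr => w _; apply: eq_bigr => v _.
rewrite !mxE mulr_sumr; apply: eq_bigr => b _; rewrite !mxE; ring.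
Qed.

Definition Pk n d c (P : 'I_n -> 'I_c -> 'M[C]_d) (X : 'M[C]_(n,d)) (k : 'I_c)
  : 'M[C]_(n,d) := \matrix_(v, b) (row v X *m P v k) 0 b.

Lemma row_Pk n d c (P : 'I_n -> 'I_c -> 'M[C]_d) X k v :
  row v (Pk P X k) = row v X *m P v k.
Proof. by apply/rowP => b; rewrite !mxE. Qed.

Lemma sum_Pk n d c (P : 'I_n -> 'I_c -> 'M[C]_d) X :
  (forall v, \sum_k P v k = 1%:M) -> \sum_k Pk P X k = X.
Proof.
move=> hs; apply/matrixP => v b; rewrite summxE.
under eq_bigr do rewrite mxE.
by rewrite -summxE -mulmx_sumr hs mulmx1 mxE.
Qed.

Lemma Pk_semilinear n d c (P : 'I_n -> 'I_c -> 'M[C]_d) k :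
  semilinear (fun X => Pk P X k).
Proof.
split=> [a X|X Y]; apply/matrixP => v b; rewrite !mxE.
  by rewrite mulr_sumr; apply: eq_bigr => j _; rewrite !mxE mulrA.
by rewrite -big_split; apply: eq_bigr => j _; rewrite !mxE mulrDl.
Qed.

Lemma norm_Pk n d c (P : 'I_n -> 'I_c -> 'M[C]_d) X :
  (forall v k, P v k *m P v k = P v k) ->
  (forall v k, (P v k)^H = P v k) ->
  (forall v, \sum_k P v k = 1%:M) ->
  \sum_k \tr ((Pk P X k)^H *m Pk P X k) = \tr (X^H *m X).
Proof.
move=> hP2 hPh hs.
under eq_bigr do rewrite tr_norm.
rewrite tr_norm exchange_big /=; apply: eq_bigr => v _.
have -> : \sum_b `|X v b| ^+ 2 = (row v X *m (row v X)^H) 0 0.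
  by rewrite row_sq; apply: eq_bigr => b _; rewrite mxE.
have -> : (row v X *m (row v X)^H) = \sum_k (row v (Pk P X k) *m (row v (Pk P X k))^H).
  under eq_bigr do rewrite row_Pk adjM hPh mulmxA -[_ *m P v _ *m P v _]mulmxA hP2.
  by rewrite -mulmx_suml -mulmx_sumr hs mulmx1.
rewrite summxE; apply: eq_bigr => k _.
rewrite row_sq; apply: eq_bigr => b _; by rewrite [in RHS]mxE.
Qed.

Lemma quad_Pk n d c (P : 'I_n -> 'I_c -> 'M[C]_d) (A : 'M[C]_n) X k :
  (forall v, forall w, A w v != 0 -> P v k *m P w k = 0) ->
  (forall v, (P v k)^H = P v k) ->
  \tr ((Pk P X k)^H *m A *m Pk P X k) = 0.
Proof.
move=> hE hPh; rewrite tr_quad.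
apply: big1 => w _; apply: big1 => v _.
have [->|nz] := eqVneq (A w v) 0; first by rewrite mul0r.
rewrite !row_Pk adjM hPh mulmxA -[_ *m P v k *m P w k]mulmxA hE //.
by rewrite mulmx0 mul0mx mxE mulr0.
Qed.


Lemma Pk_scale n d c (P : 'I_n -> 'I_c -> 'M[C]_d) k a X :
  Pk P (a *: X) k = a *: Pk P X k.
Proof. by have [h _] := Pk_semilinear P k; apply: h. Qed.

Lemma Pk_add n d c (P : 'I_n -> 'I_c -> 'M[C]_d) k X Y :
  Pk P (X + Y) k = Pk P X k + Pk P Y k.
Proof. by have [_ h] := Pk_semilinear P k; apply: h. Qed.

End Gen.

Section Constr.
Variables (C : numClosedFieldType) (n d c' g : nat).
Variables (P : 'I_n -> 'I_c'.+1 -> 'M[C]_d) (V : 'M[C]_n) (E : 'M[C]_(g,n)).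
Variable (S : {set 'I_n}).

Definition Fc (Z : 'M[C]_(g,d)) : 'M[C]_(c',d) :=
  \matrix_(r, b) \sum_(j in S)
     (V *m Pk P (V^H *m (E^T *m Z)) (widen_ord (leqnSn c') r)) j b.

Fact Fc_semilinear : semilinear Fc.
Proof.
split=> [a Z|Z1 Z2]; apply/matrixP => r b; rewrite !mxE.
  rewrite -!scalemxAr Pk_scale -scalemxAr mulr_sumr.
  by apply: eq_bigr => j _; rewrite mxE.
rewrite !mulmxDr Pk_add mulmxDr -big_split.
by apply: eq_bigr => j _; rewrite mxE.
Qed.

HB.instance Definition _ :=
  GRing.isSemilinear.Build C 'M[C]_(g,d) 'M[C]_(c',d) _ Fc Fc_semilinear.

End Constr.

Section Main.
Variable C : numClosedFieldType.

Lemma main_abstract n d c' (P : 'I_n -> 'I_c'.+1 -> 'M[C]_d) (A V : 'M[C]_n)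
    (lam : 'rV[C]_n) (J S : {set 'I_n}) (mu2 mun : C) :
  (0 < d)%N ->
  (forall v k, P v k *m P v k = P v k) ->
  (forall v k, (P v k)^H = P v k) ->
  (forall v, \sum_k P v k = 1%:M) ->
  (forall v w k, A w v != 0 -> P v k *m P w k = 0) ->
  V *m V^H = 1%:M -> V^H *m V = 1%:M ->
  A = V^H *m diag_mx lam *m V ->
  (forall j, j \in J -> lam 0 j = mun) ->
  (forall j, j \notin S -> lam 0 j <= mu2) ->
  (#|S| <= 1)%N ->
  (forall j, j \in S -> j \notin J) ->
  (c' < #|J|)%N ->
  mu2 - mun <= c'.+1%:R * mu2.
Proof.
move=> d0 hP2 hPh hs hE hVV hVV' hA hJ hS S1 hSJ cJ.
set g := #|J|.
pose E : 'M[C]_(g, n) := \matrix_(a, j) ((enum_val a == j)%:R).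
pose K := lin_mx (Fc P V E S).
have knz : kermx K != 0.
  rewrite -mxrank_eq0 mxrank_ker subn_eq0 -ltnNge.
  by apply: leq_ltn_trans (rank_leq_col K) _; rewrite ltn_mul2r d0.
have [i zi] : exists i, row i (kermx K) != 0.
  case: (pickP (fun i => row i (kermx K) != 0)) => [i hi|h]; first by exists i.
  exfalso; move/eqP: knz; apply; apply/row_matrixP => i; rewrite row0.
  by apply/eqP; move: (h i) => /negbFE.
set z := row i (kermx K).
have zK : z *m K = 0 by rewrite /z -row_mul mulmx_ker row0.
set Z := vec_mx z.
have FZ : Fc P V E S Z = 0.
  by move: zK; rewrite mul_rV_lin => /eqP; rewrite mxvec_eq0 => /eqP.
have Znz : Z != 0 by rewrite vec_mx_eq0.
set Y0 := E^T *m Z.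
have Y0out : forall j b, j \notin J -> Y0 j b = 0.
  move=> j b hj; rewrite !mxE; apply: big1 => a _; rewrite !mxE.
  case: eqP => [ej|]; last by rewrite mul0r.
  by move: (enum_valP a); rewrite ej (negbTE hj).
have Y0nz : Y0 != 0.
  apply: contraNneq Znz => Y00; apply/eqP/matrixP => a b.
  have := congr1 (fun M : 'M_(n,d) => M (enum_val a) b) Y00.
  rewrite /= mxE (bigD1 a) //= big1 ?addr0 ?mxE ?eqxx ?mul1r //.
  move=> a' na; rewrite !mxE; case: eqP => [/enum_val_inj e|]; last by rewrite mul0r.
  by rewrite e eqxx in na.
set X := V^H *m Y0.
pose x k := Pk P X k.
pose y k := V *m x k.
have sumy : \sum_k y k = Y0.
  by rewrite -mulmx_sumr sum_Pk // /X mulmxA hVV mul1mx.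
have yS : forall k j b, j \in S -> y k j b = 0.
  have yS' : forall r j b, j \in S -> y (widen_ord (leqnSn c') r) j b = 0.
    move=> r j b jS.
    have eqS := card_le1P S1 j jS.
    have := congr1 (fun M : 'M_(c',d) => M r b) FZ.
    rewrite /= mxE (big_pred1 j); first by move=> ->; rewrite mxE.
    by move=> j'; rewrite eqS.
  move=> k j b jS.
  have [lt_k|ge_k] := ltnP k c'.
    have -> : k = widen_ord (leqnSn c') (Ordinal lt_k) by apply: val_inj.
    exact: yS'.
  have -> : k = ord_max by apply: val_inj => /=; apply/eqP; rewrite eqn_leq ge_k -ltnS ltn_ord.
  have := congr1 (fun M : 'M_(n,d) => M j b) sumy.
  rewrite /= Y0out ?hSJ // summxE big_ord_recr /= big1 ?add0r //.
  by move=> r _; apply: yS'.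
pose w j := if j \in S then 0 else mu2 - lam 0 j.
have w0 : forall j, 0 <= w j.
  by move=> j; rewrite /w; case: ifP => // /negbT /hS; rewrite subr_ge0.
pose hf (W : 'M[C]_(n,d)) := \sum_j w j * \sum_b `|W j b| ^+ 2.
pose nrm (W : 'M[C]_(n,d)) := \tr (W^H *m W).
have h1 : hf Y0 = (mu2 - mun) * nrm Y0.
  rewrite /nrm tr_norm mulr_sumr; apply: eq_bigr => j _.
  case: (boolP (j \in J)) => jJ.
    have jS : j \notin S := contraL (hSJ j) jJ.
    by rewrite /w (negbTE jS) hJ.
  by rewrite big1 ?mulr0 // => b _; rewrite Y0out // normr0 expr0n.
have h2 : hf Y0 <= c'.+1%:R * \sum_k hf (y k).
  rewrite -sumy /hf [in X in _ <= X]exchange_big /= mulr_sumr; apply: ler_sum => j _.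
  rewrite -mulr_sumr mulrCA; apply: (ler_wpM2l (w0 j)).
  rewrite [in X in _ <= X]exchange_big /= mulr_sumr; apply: ler_sum => b _.
  rewrite summxE; exact: sum_sq_le.
have h3 : forall k, hf (y k) = mu2 * nrm (y k) - \tr ((x k)^H *m A *m x k).
  move=> k; rewrite hA.
  have -> : (x k)^H *m (V^H *m diag_mx lam *m V) *m x k = (y k)^H *m diag_mx lam *m y k.
    by rewrite /y adjM !mulmxA.
  rewrite tr_diag_form /nrm tr_norm mulr_sumr -sumrB; apply: eq_bigr => j _.
  rewrite /w; case: ifP => jS; last by rewrite mulrBl.
  by rewrite big1 ?mulr0 ?subrr // => b _; rewrite yS // normr0 expr0n.
have h4 : forall k, \tr ((x k)^H *m A *m x k) = 0.
  by move=> k; apply: quad_Pk => // v w'; apply: hE.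
have h5 : \sum_k nrm (y k) = nrm Y0.
  have <- : nrm X = nrm Y0.
    by rewrite /nrm /X adjM adjK !mulmxA -[Y0^H *m V *m V^H]mulmxA hVV mulmx1.
  rewrite /nrm -(norm_Pk X hP2 hPh hs); apply: eq_bigr => k _.
  rewrite /y adjM !mulmxA -[(x k)^H *m V^H *m V]mulmxA hVV' mulmx1. reflexivity.
have h6 : 0 < nrm Y0.
  have pos : forall j, 0 <= \sum_b `|Y0 j b| ^+ 2.
    by move=> j; apply: sumr_ge0 => b _; exact: exprn_ge0.
  rewrite /nrm tr_norm lt_def; apply/andP; split; last by apply: sumr_ge0 => j _.
  apply: contra Y0nz => /eqP h0; apply/eqP/matrixP => j b; rewrite [in RHS]mxE.
  have hj := psumr_eq0P (fun j _ => pos j) h0 (i:=j) isT.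
  have := psumr_eq0P (fun b _ => exprn_ge0 2 (normr_ge0 (Y0 j b))) hj (i:=b) isT.
  by move/eqP; rewrite sqrf_eq0 normr_eq0 => /eqP.
have : (mu2 - mun) * nrm Y0 <= (c'.+1%:R * mu2) * nrm Y0.
  rewrite -h1; apply: le_trans h2 _.
  under eq_bigr do rewrite h3 h4 subr0.
  by rewrite -mulr_sumr h5 mulrA.
by rewrite ler_pM2r.
Qed.
End Main.

Lemma card_count (T : finType) (Q : pred T) : #|[set j | Q j]| = count Q (enum T).
Proof. by rewrite cardsE cardE size_filter enumT. Qed.

Lemma char_poly_conj (R : comUnitRingType) n (N M D : 'M[R]_n) :
  N *m M = 1%:M -> char_poly (N *m D *m M) = char_poly D.
Proof.
move=> NM.
pose N' := map_mx polyC N; pose M' := map_mx polyC M.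
have NM' : N' *m M' = 1%:M by rewrite -map_mxM NM map_mx1.
rewrite /char_poly.
have -> : char_poly_mx (N *m D *m M) = N' *m char_poly_mx D *m M'.
  rewrite /char_poly_mx mulmxBr mulmxBl !map_mxM scalar_mxC -['X%:M *m _ *m _]mulmxA NM' mulmx1.
  by [].
by rewrite !det_mulmx mulrAC -det_mulmx NM' det1 mul1r.
Qed.

Lemma sorted_count_gt (R : realDomainType) (s : seq R) :
  sorted (fun x y => y <= x) s -> (count (fun x => ~~ (x <= s`_1)%R) s <= 1)%N.
Proof.
case: s => [|a [|b t]] //=; first by case: (~~ _).
move=> /andP[_ pt].
have tr : transitive (fun x y : R => y <= x) by move=> x y z hyx hzy; exact: le_trans hzy hyx.
have H := order_path_min tr pt.
rewrite lexx /=.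
have -> : count (fun x => ~~ (x <= b)) t = 0%N.
  apply/eqP; rewrite -leqn0 leqNgt -has_count; apply/hasPn => x /(allP H) ->; done.
by case: (~~ (a <= b)).
Qed.

Lemma sorted_last_le (R : realDomainType) (s : seq R) :
  sorted (fun x y => y <= x) s -> (1 < size s)%N -> last 0 s <= s`_1.
Proof.
case: s => [|a [|b t]] //= /andP[_ pt] _.
have tr : transitive (fun x y : R => y <= x) by move=> x y z hyx hzy; exact: le_trans hzy hyx.
have H := order_path_min tr pt.
have := mem_last b t; rewrite inE => /orP[/eqP ->//|/(allP H)//].
Qed.

Unset Implicit Arguments.

Theorem theorem3 (R : realType) (n : nat) (e : rel 'I_n) (s : seq R) :
  simple_graph e -> connected_graph e ->
  sorted_spectrum (adjmx R e) s ->
  0 < s`_1 ->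
  forall c : nat, quantum_colorable R e c ->
    1 + Num.min ((count_mem (last 0 s) s)%:R) (`|last 0 s| / s`_1) <= (c%:R : R).
Proof.
move=> [hsym eirr] _ [ssorted hchar] mu2pos c [d [P [d0 [hproj [hsum hcol]]]]].
set mu2 := s`_1; set mun := last 0 s; set g := count_mem mun s.
have size_s : size s = n.
  have := congr1 (fun p : {poly R} => size p) hchar.
  by rewrite /= size_char_poly size_prod_XsubC => -[].
have s2 : (1 < size s)%N.
  rewrite ltnNge; apply/negP => hs; move: mu2pos; rewrite /mu2 nth_default //.
  by rewrite ltxx.
have munle : mun <= mu2 by apply: sorted_last_le.
have v0 : 'I_n by rewrite -size_s; exact: (Ordinal s2).
have d1 : (1%:M : 'M[R[i]]_d) != 0.
  apply/eqP => /matrixP /(_ (Ordinal d0) (Ordinal d0)); rewrite !mxE eqxx /=.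
  by move/eqP; rewrite oner_eq0.
case: c P hproj hsum hcol => [|c'] P hproj hsum hcol.
  by move: (hsum v0); rewrite big_ord0 => /esym/eqP; rewrite (negbTE d1).
pose f := real_complex R.
pose AC : 'M[R[i]]_n := adjmx R[i] e.
have ACmap : AC = map_mx f (adjmx R e).
  by apply/matrixP => i j; rewrite !mxE /f rmorph_nat.
have ACH : AC^H = AC.
  by apply/matrixP => i j; rewrite !mxE hsym rmorph_nat.
have ACnorm : AC \is normalmx by apply/normalmxP; rewrite ACH.
have /orthomx_spectralP hA := ACnorm.
set V := spectralmx AC in hA; set lam := spectral_diag AC in hA.
have Vu : V \is unitarymx := spectral_unitarymx AC.
have hVV : V *m V^H = 1%:M by apply/unitarymxP.
have invV : invmx V = V^H := invmx_unitary Vu.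
have hVV' : V^H *m V = 1%:M by rewrite -invV mulVmx // spectral_unit.
have hA' : AC = V^H *m diag_mx lam *m V by rewrite -invV.
set lamseq := [seq lam 0 i | i <- enum 'I_n].
have cpAC : char_poly AC = \prod_(x <- map f s) ('X - x%:P).
  rewrite ACmap -map_char_poly hchar rmorph_prod big_map.
  by apply: eq_bigr => x _; rewrite /= map_polyXsubC.
have cpD : char_poly AC = \prod_(x <- lamseq) ('X - x%:P).
  rewrite {1}hA char_poly_conj ?mulVmx ?spectral_unit //.
  rewrite char_poly_trig ?diag_mx_is_trig // big_map big_enum /=.
  by apply: eq_bigr => i _; rewrite mxE eqxx mulr1n.
have hperm : perm_eq (map f s) lamseq := prod_XsubC_eq (etrans (esym cpAC) cpD).
have cnt := permP hperm.
have fI : injective f := @complexI R.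
have mu2s : f mu2 \in lamseq by rewrite -(perm_mem hperm) map_f // mem_nth.
have c'pos : (0 < c')%N.
  case: c' P hproj hsum hcol => // P hproj hsum hcol.
  have noe : forall v w, e v w = false.
    move=> v w; apply/negP => evw; move: (hcol v w ord0 evw).
    have h1 : forall u, P u ord0 = 1%:M by move=> u; rewrite -(hsum u) big_ord1.
    by rewrite !h1 mulmx1 => /eqP; rewrite (negbTE d1).
  have AC0 : AC = 0 by apply/matrixP => i j; rewrite !mxE noe.
  have D0 : diag_mx lam = 0.
    have <- : V *m AC *m V^H = diag_mx lam.
      by rewrite hA' !mulmxA hVV mul1mx -mulmxA hVV mulmx1.
    by rewrite AC0 mulmx0 mul0mx.
  move: mu2s => /mapP [i _ hi].
  have : lam 0 i = 0.
    by have := congr1 (fun M : 'M_n => M i i) D0; rewrite /= !mxE eqxx mulr1n.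
  rewrite -hi => /eqP; rewrite -(rmorph0 f) (inj_eq fI) => /eqP h.
  by move: mu2pos; rewrite -/mu2 h ltxx.
have [gle|glt] := leqP g c'.
  apply: le_trans (_ : 1 + g%:R <= _).
    by rewrite lerD2l ge_min lexx.
  by rewrite -[c'.+1]add1n natrD lerD2l ler_nat.
pose J := [set j | lam 0 j == f mun].
pose S := [set j | ~~ (lam 0 j <= f mu2)].
have cardJ : #|J| = g.
  rewrite card_count.
  have -> : count (fun j => lam 0 j == f mun) (enum 'I_n) =
            count (fun x => x == f mun) lamseq.
    by rewrite /lamseq [in RHS]count_map.
  rewrite -cnt count_map /g; apply: eq_count => x /=.
  by apply/eqP/eqP => [/fI|->].
have cardS : (#|S| <= 1)%N.
  rewrite card_count.
  have -> : count (fun j => ~~ (lam 0 j <= f mu2)) (enum 'I_n) =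
            count (fun x => ~~ (x <= f mu2)) lamseq.
    by rewrite /lamseq [in RHS]count_map.
  rewrite -cnt count_map.
  rewrite (eq_count (a2 := fun x => ~~ (x <= mu2))); first exact: sorted_count_gt.
  by move=> x /=; rewrite lecR.
have key : f mu2 - f mun <= c'.+1%:R * f mu2.
  apply: (main_abstract (P:=P) (A:=AC) (V:=V) (lam:=lam) (J:=J) (S:=S)) => //.
  - by move=> v k; case: (hproj v k).
  - by move=> v k; case: (hproj v k).
  - move=> v w k; rewrite /AC mxE; case: (boolP (e w v)) => [ewv _|_]; last by rewrite eqxx.
    by apply: hcol; rewrite hsym.
  - by move=> j; rewrite inE => /eqP.
  - by move=> j; rewrite inE negbK.
  - move=> j; rewrite !inE => h; apply/negP => /eqP hj; move: h; rewrite hj lecR munle.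
    by [].
  - by rewrite cardJ.
have key' : mu2 - mun <= c'.+1%:R * mu2.
  by move: key; rewrite /f -rmorphB -(rmorph_nat (real_complex R)) -rmorphM lecR.
apply: le_trans (_ : 1 + `|mun| / mu2 <= _); first by rewrite lerD2l ge_min lexx orbT.
rewrite -[c'.+1]add1n natrD lerD2l ler_pdivrMr //.
have c1 : 1 <= c'%:R :> R by rewrite ler1n.
case: (lerP mun 0) => h.
  rewrite ler0_norm //; move: key'; rewrite -[c'.+1]add1n natrD mulrDl mul1r.
  by rewrite lerD2l.
rewrite gtr0_norm //; apply: le_trans munle _.
by rewrite -[X in X <= _]mul1r ler_pM2r.
Qed.
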